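(* Let $\alpha=(\alpha_1,\dots,\alpha_t)$ be palindromic (i.e. $\alpha_i=\alpha_{t+1-i}$ for all $i$) with $t$ odd, let $F=\breve F(\alpha)$ with elements $x_1,\dots,x_n$. The statistics $\chi_{x_k}-\chi_{x_{n-k+1}}$ are $0$-mesic under rowmotion for all $k\in[n]$ if and only if the statistics $\hat\chi_{x_k}+\hat\chi_{x_{n-k+1}}$ are $1$-mesic under rowmotion for all $k\in[n]$.
   Context: A fence $\breve F(\alpha_1,\dots,\alpha_t)$ ($t\ge2$, positive integers, $\alpha_1,\alpha_t\ge2$) is the poset on $\{x_1,\dots,x_n\}$, $n=\alpha_1+\dots+\alpha_t-1$, with $a_i=\alpha_1+\dots+\alpha_i$, $a_0=0$, whose cover relations are: for $1\le j\le n-1$ with $a_{i-1}\le j<a_i$, $x_j\lessdot x_{j+1}$ if $i$ odd and $x_j\gtrdot x_{j+1}$ if $i$ even. $\mathcal J(F)$ is the set of order ideals; rowmotion $\rho$ sends $I$ to the order ideal generated by $\min(F\setminus I)$. $\hat\chi_q(I)=1$ if $q\in I$, else 0; $\chi_q(I)=1$ if $q\in\max(I)$, else 0. A statistic is $c$-mesic under rowmotion if its average over every $\rho$-orbit equals $c$. *)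

(* Defs.v *)
From mathcomp Require Import all_boot all_order all_algebra.
Unset Printing Implicit Defensive.
Import GRing.Theory Num.Theory.

(* Fence F(alpha_1,...,alpha_t). Elements x_1..x_n are represented by 'I_n,
   x_(k+1) <-> the ordinal k (0-indexed). *)

Definition fence_n (alpha : seq nat) : nat := (sumn alpha).-1.

Definition psum (alpha : seq nat) (i : nat) : nat := sumn (take i alpha).

(* for 1 <= j <= n-1, the unique i with a_(i-1) <= j < a_i *)
Definition seg (alpha : seq nat) (j : nat) : nat :=
  (count (fun i => psum alpha i <= j) (iota 1 (size alpha))).+1.

(* cover relation u <. v (u covered by v), for 0-indexed u v.
   For 1-indexed j (the pair x_j, x_(j+1), i.e. 0-indexed j-1, j):
   x_j <. x_(j+1) if seg j odd, x_j >. x_(j+1) if seg j even. *)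
Definition fcover (alpha : seq nat) : rel 'I_(fence_n alpha) :=
  fun u v => ((v == u.+1 :> nat) && odd (seg alpha u.+1))
          || ((u == v.+1 :> nat) && ~~ odd (seg alpha v.+1)).

Definition fle (alpha : seq nat) (u v : 'I_(fence_n alpha)) : bool :=
  connect (fcover alpha) u v.
Definition flt (alpha : seq nat) (u v : 'I_(fence_n alpha)) : bool :=
  (u != v) && fle alpha u v.

Definition is_ideal (alpha : seq nat) (I : {set 'I_(fence_n alpha)}) : bool :=
  [forall u, forall v, fle alpha u v ==> (v \in I) ==> (u \in I)].

Definition min_compl (alpha : seq nat) (I : {set 'I_(fence_n alpha)}) :=
  [set x | (x \notin I) && [forall y, (y \notin I) ==> ~~ flt alpha y x]].

Definition ideal_gen (alpha : seq nat) (S : {set 'I_(fence_n alpha)}) :=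
  [set x | [exists y, (y \in S) && fle alpha x y]].

Definition rowmotion (alpha : seq nat) (I : {set 'I_(fence_n alpha)}) :
  {set 'I_(fence_n alpha)} := ideal_gen alpha (min_compl alpha I).

Definition chihat (alpha : seq nat) (q : 'I_(fence_n alpha))
  (I : {set 'I_(fence_n alpha)}) : rat := (q \in I)%:R%R.

Definition chi (alpha : seq nat) (q : 'I_(fence_n alpha))
  (I : {set 'I_(fence_n alpha)}) : rat :=
  ((q \in I) && [forall y, (y \in I) ==> ~~ flt alpha q y])%:R%R.

Definition mesic (alpha : seq nat) (f : {set 'I_(fence_n alpha)} -> rat)
  (c : rat) : Prop :=
  forall I : {set 'I_(fence_n alpha)}, is_ideal alpha I ->
    ((\sum_(J <- orbit (rowmotion alpha) I) f J)
      / (size (orbit (rowmotion alpha) I))%:R = c)%R.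

(* Main.v *)
Require Import Defs.
From mathcomp Require Import all_boot all_order all_algebra.
From mathcomp Require Import zify ring.
Import GRing.Theory Num.Theory.

Section Fence.
Variable alpha : seq nat.
Local Notation n := (fence_n alpha).
Local Notation T := ('I_(fence_n alpha)).
Definition up (j : nat) := odd (seg alpha j.+1).

Definition FF (u v : nat) : Prop :=
  (u <= v /\ forall j, u <= j < v -> up j) \/ (v <= u /\ forall j, v <= j < u -> ~~ up j).

Lemma FF_step (x y z : T) : fcover alpha x y -> FF y z -> FF x z.
Proof.
rewrite /fcover /FF -!/(up _) => /orP[/andP[/eqP Hy Hu]|/andP[/eqP Hx Hu]] [[H1 H2]|[H1 H2]].
- left; split; first lia. move=> j Hj. case: (j =P x) => [->//|/eqP Hne]. apply: H2; lia.
- case: (z =P y :> nat) => Hz.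
  + left; split; first lia. move=> j Hj. have -> : j = x by lia. done.
  + have := H2 x; rewrite Hu => /(_ _)/negP; lia.
- case: (z =P y :> nat) => Hz.
  + right; split; first lia. move=> j Hj. have -> : j = y by lia. done.
  + have := H2 y; rewrite (negbTE Hu) => /(_ _); lia.
- right; split; first lia. move=> j Hj. case: (j =P y) => [->//|/eqP Hne]. apply: H2; lia.
Qed.

Lemma fle_FF (u v : T) : fle alpha u v -> FF u v.
Proof.
move/connectP=> [p Hp ->]. elim: p u Hp => [|y p IH] u /=.
  move=> _; left; split => // j; lia.
move=> /andP[H1 H2]. exact: FF_step H1 (IH _ H2).
Qed.

Lemma FF_fle (u v : T) : FF u v -> fle alpha u v.
Proof.
case=> [[H1 H2]|[H1 H2]].
- move: H1 H2; move Hd: (v - u) => d; elim: d u Hd => [|d IH] u Hd H1 H2.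
    have -> : u = v by apply: val_inj; rewrite /=; lia. exact: connect0.
  have Hlt : u.+1 < n by have := ltn_ord v; lia.
  apply: (connect_trans (y := Ordinal Hlt)).
    apply: connect1; rewrite /fcover /=; apply/orP; left; rewrite eqxx /=.
    by have := H2 u; rewrite /up; apply; lia.
  apply: IH => /=; try lia. move=> j Hj; apply: H2; lia.
- move: H1 H2; move Hd: (u - v) => d; elim: d u Hd => [|d IH] u Hd H1 H2.
    have -> : u = v by apply: val_inj; rewrite /=; lia. exact: connect0.
  have Hlt : u.-1 < n by have := ltn_ord u; lia.
  apply: (connect_trans (y := Ordinal Hlt)).
    apply: connect1; rewrite /fcover /=. apply/orP; right.
    have -> : u.-1.+1 = u by lia. rewrite eqxx /=.
    have := H2 u.-1; rewrite /up.
    have -> : u.-1.+1 = u by lia. by apply; lia.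
  apply: IH => /=; try lia. move=> j Hj; apply: H2; lia.
Qed.

Lemma fleP (u v : T) : fle alpha u v <-> FF u v.
Proof. split; [exact: fle_FF | exact: FF_fle]. Qed.

Lemma fle_refl (u : T) : fle alpha u u. Proof. exact: connect0. Qed.
Lemma fle_trans (u v w : T) : fle alpha u v -> fle alpha v w -> fle alpha u w.
Proof. exact: connect_trans. Qed.
Lemma fle_anti (u v : T) : fle alpha u v -> fle alpha v u -> u = v.
Proof.
move=> /fleP H1 /fleP H2; apply: val_inj => /=.
case: (ltngtP u v) => // Huv; exfalso.
- case: H1 => [[_ A]|[B _]]; last lia.
  case: H2 => [[B _]|[_ C]]; first lia.
  have := A u; have := C u. move=> h1 h2. have := h2 ltac:(lia). have := h1 ltac:(lia). by move=> /negP.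
- case: H1 => [[B _]|[_ A]]; first lia.
  case: H2 => [[_ C]|[B _]]; last lia.
  have := A v; have := C v. move=> h1 h2. have := h2 ltac:(lia). have := h1 ltac:(lia). by move=> ->.
Qed.

Arguments fle_trans {u v w}.
Arguments fle_anti {u v}.
Lemma flt_fle {u v : T} : flt alpha u v -> fle alpha u v.
Proof. by case/andP. Qed.

Lemma max_rho (J : {set T}) p :
  ((p \in rowmotion alpha J) && [forall y, (y \in rowmotion alpha J) ==> ~~ flt alpha p y])
  = (p \in min_compl alpha J).
Proof.
apply/idP/idP.
- case/andP => /[dup] Hp; rewrite inE => /existsP[m /andP[Hm Hpm]] /forallP Hall.
  case: (p =P m) => [->//|/eqP Hne].
  have := Hall m; rewrite /flt Hne Hpm /= => /implyP H; suff: false by []; apply: H.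
  rewrite inE; apply/existsP; exists m; rewrite Hm; exact: fle_refl.
- move=> Hp; apply/andP; split.
    rewrite inE; apply/existsP; exists p; rewrite Hp; exact: fle_refl.
  apply/forallP => y; apply/implyP; rewrite inE => /existsP[m /andP[Hm Hym]].
  apply/negP => /andP[Hpy Hfpy].
  have Hpm : p != m.
    apply/negP => /eqP Epm; move: Hym; rewrite -Epm => Hyp.
    by move/negP: Hpy; apply; rewrite (fle_anti Hfpy Hyp).
  move: Hm; rewrite inE => /andP[_ /forallP /(_ p) /implyP].
  move: Hp; rewrite inE => /andP[Hp _] /(_ Hp).
  by rewrite /flt Hpm (fle_trans Hfpy Hym).
Qed.

Lemma chi_rho (J : {set T}) p :
  chi alpha p (rowmotion alpha J) = (p \in min_compl alpha J)%:R%R.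
Proof. by rewrite /chi max_rho. Qed.

Lemma rho_ideal (I : {set T}) : is_ideal alpha (rowmotion alpha I).
Proof.
apply/forallP => u; apply/forallP => v; apply/implyP => Huv; apply/implyP.
rewrite !inE => /existsP[m /andP[Hm Hvm]]; apply/existsP; exists m.
by rewrite Hm (fle_trans Huv Hvm).
Qed.

Definition downs (x : T) := [set z | flt alpha z x].
Definition ups (x : T) := [set z | flt alpha x z].

Lemma downs_proper {x y : T} : flt alpha y x -> downs y \proper downs x.
Proof.
move=> /andP[Hyx Hfyx]; apply/properP; split.
  apply/subsetP => z; rewrite !inE => /andP[Hzy Hfzy]; apply/andP; split.
    apply/negP => /eqP Ezx; move: Hfzy; rewrite Ezx => Hf.
    by move/negP: Hyx; apply; rewrite (fle_anti Hfyx Hf).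
  exact: fle_trans Hfzy Hfyx.
by exists y; rewrite !inE /flt ?Hyx ?Hfyx ?eqxx.
Qed.

Lemma ups_proper {x y : T} : flt alpha x y -> ups y \proper ups x.
Proof.
move=> /andP[Hyx Hfyx]; apply/properP; split.
  apply/subsetP => z; rewrite !inE => /andP[Hzy Hfzy]; apply/andP; split.
    apply/negP => /eqP Ezx; move: Hfzy; rewrite -Ezx => Hf.
    by move/negP: Hyx; apply; rewrite (fle_anti Hfyx Hf).
  exact: fle_trans Hfyx Hfzy.
by exists y; rewrite !inE /flt ?Hyx ?Hfyx ?eqxx.
Qed.

Lemma minc_exists_aux (I : {set T}) k x : #|downs x| < k -> x \notin I ->
  exists2 m, m \in min_compl alpha I & fle alpha m x.
Proof.
elim: k x => [//|k IH] x Hx HxI.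
case Hm: (x \in min_compl alpha I); first by exists x => //; exact: fle_refl.
move: Hm; rewrite inE HxI /= => /negbT; rewrite negb_forall => /existsP[y].
rewrite negb_imply negbK => /andP[HyI Hyx].
have Hc := proper_card (downs_proper Hyx).
have Hyk : #|downs y| < k by lia.
have [m Hm Hmy] := IH y Hyk HyI.
by exists m => //; exact: fle_trans Hmy (flt_fle Hyx).
Qed.

Lemma minc_exists (I : {set T}) x : x \notin I ->
  exists2 m, m \in min_compl alpha I & fle alpha m x.
Proof. exact: (@minc_exists_aux I _ x (ltnSn _)). Qed.

Lemma notin_ideal (I : {set T}) x : is_ideal alpha I ->
  (x \notin I) = [exists m, (m \in min_compl alpha I) && fle alpha m x].
Proof.
move=> HI; apply/idP/existsP.
  by move=> /minc_exists[m Hm Hmx]; exists m; rewrite Hm.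
case=> m /andP[]; rewrite inE => /andP[HmI _] Hmx; apply/negP => HxI.
move/forallP: HI => /(_ m) /forallP /(_ x); rewrite Hmx HxI /=.
by move: HmI => /negbTE ->.
Qed.

Definition ideals : {pred {set T}} := fun I => is_ideal alpha I.

Lemma rho_inj : {in ideals &, injective (rowmotion alpha)}.
Proof.
move=> I J HI HJ HIJ.
have Hm : min_compl alpha I = min_compl alpha J.
  by apply/setP => p; rewrite -!max_rho HIJ.
apply/setP => x; apply: negb_inj; rewrite !notin_ideal //; by rewrite Hm.
Qed.

Lemma rho_homo : {homo rowmotion alpha : I / I \in ideals}.
Proof. move=> I _; exact: rho_ideal. Qed.

Lemma orbit_ideal (I J : {set T}) : is_ideal alpha I ->
  J \in orbit (rowmotion alpha) I -> is_ideal alpha J.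
Proof.
move=> HI; rewrite -fconnect_orbit => /iter_findex <-.
elim: (findex _ _ _) => //= k _; exact: rho_ideal.
Qed.

Lemma orbit_sum (g : {set T} -> rat) (I : {set T}) : is_ideal alpha I ->
  (\sum_(J <- orbit (rowmotion alpha) I) g (rowmotion alpha J) =
   \sum_(J <- orbit (rowmotion alpha) I) g J)%R.
Proof.
move=> HI; have Hit := iter_order_in rho_homo rho_inj HI.
rewrite /orbit -(big_map (rowmotion alpha) xpredT g); apply: perm_big.
move: Hit; set f := rowmotion alpha; elim: (order f I) => [|k _] //.
move=> Hit.
have E1 : traject f I k.+2 = I :: traject f (f I) k.+1 by [].
have E2 : traject f I k.+2 = rcons (traject f I k.+1) I by rewrite trajectSr Hit.
have Hm : map f (traject f I k.+1) = traject f (f I) k.+1.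
  elim: k.+1 I {Hit E1 E2 HI} => //= j IH x; by rewrite IH.
by rewrite Hm -(perm_cons I) -E1 E2 perm_rcons.
Qed.

Definition noUp (p : T) := forall y, ~~ flt alpha p y.
Definition noDown (p : T) := forall y, ~~ flt alpha y p.
Definition upMin (p u : T) := flt alpha p u /\ forall y, flt alpha p y -> fle alpha u y.
Definition downMax (p l : T) := flt alpha l p /\ forall y, flt alpha y p -> fle alpha y l.

Lemma flt_FF (p y : T) : flt alpha p y -> (p : nat) <> y /\ FF p y.
Proof.
case/andP => Hne /fleP H; split => // E; move/negP: Hne; apply; apply/eqP; exact: val_inj.
Qed.

Lemma trichot (p : T) : noUp p \/ (exists u, upMin p u) \/ noDown p.
Proof.
case HL: ((0 < p) && ~~ up p.-1); case HR: ((p.+1 < n) && up p).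
- right; right => y; apply/negP => /flt_FF [Hne [[H1 H2]|[H1 H2]]].
  + move: HL => /andP[Hp0 /negP Hn]; apply: Hn; apply: H2; lia.
  + move: HR => /andP[Hp1 Hu]; have Hc := H2 p ltac:(lia). by rewrite Hu in Hc.
- right; left.
  have Hlt : p.-1 < n by have := ltn_ord p; lia.
  move: HL => /andP[Hp0 Hup].
  exists (Ordinal Hlt); split.
    apply/andP; split.
      apply/negP => /eqP/(congr1 val) /=; lia.
    apply/fleP; right; split => /=; first lia.
    move=> j Hj; have -> : j = p.-1 by lia. done.
  move=> y /flt_FF [Hne [[H1 H2]|[H1 H2]]].
  + exfalso; move/negbT: HR; rewrite negb_and => /orP[H|H].
      have := ltn_ord y; lia.
    by move/negP: H; apply; apply: H2; lia.
  + apply/fleP; right; split => /=; first lia.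
    move=> j Hj; apply: H2; lia.
- right; left.
  move: HR => /andP[Hlt Hup].
  exists (Ordinal Hlt); split.
    apply/andP; split.
      apply/negP => /eqP/(congr1 val) /=; lia.
    apply/fleP; left; split => /=; first lia.
    move=> j Hj; have -> : j = p by lia. done.
  move=> y /flt_FF [Hne [[H1 H2]|[H1 H2]]].
  + apply/fleP; left; split => /=; first lia.
    move=> j Hj; apply: H2; lia.
  + exfalso; move/negbT: HL; rewrite negb_and => /orP[H|H].
      lia.
    move: H; rewrite negbK => H.
    by have := H2 p.-1 ltac:(lia); rewrite H.
- left => y; apply/negP => /flt_FF [Hne [[H1 H2]|[H1 H2]]].
  + move/negbT: HR; rewrite negb_and => /orP[H|/negP H].
      have := ltn_ord y; lia.
    by apply: H; apply: H2; lia.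
  + move/negbT: HL; rewrite negb_and => /orP[H|H].
      lia.
    move: H; rewrite negbK => H.
    by have := H2 p.-1 ltac:(lia); rewrite H.
Qed.

Lemma idealP (J : {set T}) u v : is_ideal alpha J -> fle alpha u v -> v \in J -> u \in J.
Proof.
move=> HI Huv Hv; move/forallP: HI => /(_ u) /forallP /(_ v).
by rewrite Huv Hv.
Qed.

Arguments idealP {J u v}.
Definition mc (q : T) (J : {set T}) : rat := (q \in min_compl alpha J)%:R%R.

Lemma chi_noUp q J : noUp q -> chi alpha q J = chihat alpha q J.
Proof.
move=> H; rewrite /chi /chihat.
have -> : [forall y, (y \in J) ==> ~~ flt alpha q y].
  by apply/forallP => y; apply/implyP => _; exact: H.
by rewrite andbT.
Qed.

Lemma mc_noDown q J : noDown q -> mc q J = (1 - chihat alpha q J)%R.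
Proof.
move=> H; rewrite /mc /chihat inE.
have -> : [forall y, (y \notin J) ==> ~~ flt alpha y q].
  by apply/forallP => y; apply/implyP => _; exact: H.
by case: (q \in J); rewrite /= ?subrr ?subr0.
Qed.

Lemma chi_upMin q u J : upMin q u -> is_ideal alpha J ->
  chi alpha q J = (chihat alpha q J - chihat alpha u J)%R.
Proof.
move=> [Hqu Hmin] HJ; rewrite /chi /chihat.
case Hu: (u \in J).
  have -> : q \in J by apply: (idealP HJ (flt_fle Hqu) Hu).
  have -> : [forall y, (y \in J) ==> ~~ flt alpha q y] = false.
    apply/negbTE; rewrite negb_forall; apply/existsP; exists u; by rewrite Hu Hqu.
  by rewrite subrr.
have -> : [forall y, (y \in J) ==> ~~ flt alpha q y].
  apply/forallP => y; apply/implyP => Hy; apply/negP => /Hmin Huy.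
  by rewrite (idealP HJ Huy Hy) in Hu.
by rewrite andbT subr0.
Qed.

Lemma mc_downMax q l J : downMax q l -> is_ideal alpha J ->
  mc q J = (chihat alpha l J - chihat alpha q J)%R.
Proof.
move=> [Hlq Hmax] HJ; rewrite /mc /chihat inE.
case Hq: (q \in J).
  by rewrite (idealP HJ (flt_fle Hlq) Hq) /= subrr.
case Hl: (l \in J) => /=.
  have -> : [forall y, (y \notin J) ==> ~~ flt alpha y q].
    apply/forallP => y; apply/implyP => Hy; apply/negP => /Hmax Hyl.
    by rewrite (idealP HJ Hyl Hl) in Hy.
  by rewrite subr0.
have -> : [forall y, (y \notin J) ==> ~~ flt alpha y q] = false.
  apply/negbTE; rewrite negb_forall; apply/existsP; exists l; by rewrite Hl Hlq.
by rewrite subrr.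
Qed.

Section Rev.
Hypothesis Hrev : forall u v : T, fle alpha u v -> fle alpha (rev_ord v) (rev_ord u).

Lemma flt_rev (u v : T) : flt alpha u v -> flt alpha (rev_ord v) (rev_ord u).
Proof.
case/andP => Hne Hf; apply/andP; split; last exact: Hrev.
apply/negP => /eqP /rev_ord_inj E; by rewrite E eqxx in Hne.
Qed.

Lemma noUp_rev p : noUp p -> noDown (rev_ord p).
Proof.
move=> H y; apply/negP => /flt_rev; rewrite rev_ordK => Hc.
by have := H (rev_ord y); rewrite Hc.
Qed.

Lemma noDown_rev p : noDown p -> noUp (rev_ord p).
Proof.
move=> H y; apply/negP => /flt_rev; rewrite rev_ordK => Hc.
by have := H (rev_ord y); rewrite Hc.
Qed.

Lemma upMin_rev p u : upMin p u -> downMax (rev_ord p) (rev_ord u).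
Proof.
move=> [H1 H2]; split; first exact: flt_rev.
move=> y /flt_rev; rewrite rev_ordK => /H2 /Hrev; by rewrite rev_ordK.
Qed.


Section Orb.
Variable I : {set T}.
Hypothesis HI : is_ideal alpha I.
Local Notation O := (orbit (rowmotion alpha) I).
Definition Sorb (g : {set T} -> rat) := (\sum_(J <- O) g J)%R.
Local Notation N := ((size O)%:R : rat)%R.

Lemma S_eq f1 f2 : {in O, f1 =1 f2} -> Sorb f1 = Sorb f2.
Proof. exact: eq_big_seq. Qed.

Lemma S_chi q : Sorb (chi alpha q) = Sorb (mc q).
Proof.
rewrite /Sorb -(@orbit_sum (chi alpha q) I HI); apply: eq_bigr => J _; exact: chi_rho.
Qed.

Lemma S_sub f g : Sorb (fun J => f J - g J)%R = (Sorb f - Sorb g)%R.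
Proof. by rewrite /Sorb sumrB. Qed.

Lemma S_add f g : Sorb (fun J => f J + g J)%R = (Sorb f + Sorb g)%R.
Proof. by rewrite /Sorb big_split. Qed.

Lemma S_1m f : Sorb (fun J => 1 - f J)%R = (N - Sorb f)%R.
Proof.
rewrite S_sub; congr (_ - _)%R; rewrite /Sorb.
elim: O => [|x s IH]; by rewrite ?big_nil ?big_cons ?IH //= -natr1 addrC.
Qed.

Definition chs (p : T) := Sorb (chihat alpha p).
Definition aa (p : T) := (Sorb (chi alpha p) - Sorb (chi alpha (rev_ord p)))%R.
Definition bb (p : T) := (chs p + chs (rev_ord p) - N)%R.

Lemma S_noUp p : noUp p -> Sorb (chi alpha p) = chs p.
Proof. by move=> H; apply: S_eq => J _; exact: chi_noUp. Qed.

Lemma S_noDown p : noDown p -> Sorb (chi alpha p) = (N - chs p)%R.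
Proof. by move=> H; rewrite S_chi -S_1m; apply: S_eq => J _; exact: mc_noDown. Qed.

Lemma S_upMin p u : upMin p u -> Sorb (chi alpha p) = (chs p - chs u)%R.
Proof.
move=> H; rewrite /chs -S_sub; apply: S_eq => J HJ.
exact: (chi_upMin _ _ _ H (@orbit_ideal I J HI HJ)).
Qed.

Lemma S_downMax p l : downMax p l -> Sorb (chi alpha p) = (chs l - chs p)%R.
Proof.
move=> H; rewrite S_chi /chs -S_sub; apply: S_eq => J HJ.
exact: (mc_downMax _ _ _ H (@orbit_ideal I J HI HJ)).
Qed.

Lemma ab (p : T) : aa p = bb p \/ (exists u, flt alpha p u /\ aa p = (bb p - bb u)%R)
   \/ aa p = (- bb p)%R.
Proof.
rewrite /aa /bb; case: (trichot p) => [H|[[u H]|H]].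
- left; rewrite S_noUp // S_noDown; last exact: noUp_rev. ring.
- right; left; exists u; split; first by case: H.
  rewrite (S_upMin _ _ H) (S_downMax _ _ (upMin_rev _ _ H)); ring.
- right; right; rewrite S_noDown // S_noUp; last exact: noDown_rev. ring.
Qed.


Lemma b_of_a : (forall p, aa p = 0%R) -> forall p, bb p = 0%R.
Proof.
move=> Ha p; move Hk: #|ups p| => k; elim: k.+1 {-2}k (ltnSn k) p Hk => // {}k IH k' Hk' p Hp.
case: (ab p) => [E|[[u [Hu E]]|E]].
- by rewrite -E Ha.
- have Hc := proper_card (ups_proper Hu).
  have -> : bb p = bb u by move: E; rewrite Ha => /eqP; rewrite eq_sym subr_eq0 => /eqP.
  apply: (IH #|ups u|) => //; lia.
- by move: E; rewrite Ha => /eqP; rewrite eq_sym oppr_eq0 => /eqP.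
Qed.

Lemma a_of_b : (forall p, bb p = 0%R) -> forall p, aa p = 0%R.
Proof.
move=> Hb p; case: (ab p) => [->|[[u [_ ->]]|->]]; by rewrite ?Hb ?subrr ?oppr0.
Qed.

End Orb.
End Rev.
End Fence.

Lemma iota1S d : iota 1 d = map succn (iota 0 d).
Proof. by rewrite (iotaDl 1 0 d). Qed.

Lemma count_rev_iota (P : pred nat) d :
  count (fun k => P (d - k)) (iota 1 d) = count P (iota 0 d).
Proof.
elim: d P => [//|d IH] P.
have -> : iota 0 d.+1 = 0 :: iota 1 d by [].
rewrite -addn1 iotaD count_cat /=.
have -> : count (fun k => P (d + 1 - k)) (iota 1 d) = count (fun k => P (d - k).+1) (iota 1 d).
  apply: eq_in_count => k; rewrite mem_iota => Hk; congr P; lia.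
rewrite (IH (fun x => P x.+1)) addn0.
have -> : d + 1 - (1 + d) = 0 by lia.
rewrite iota1S count_map. rewrite addnC. congr (_ + _).
Qed.

Section Pal.
Variable alpha : seq nat.
Hypothesis Hrev : rev alpha = alpha.
Hypothesis Hs : 1 <= sumn alpha.
Local Notation n := (fence_n alpha).
Local Notation t := (size alpha).

Lemma psum_pal k : k <= t -> psum alpha k + psum alpha (t - k) = sumn alpha.
Proof.
move=> Hk; rewrite /psum.
have -> : take (t - k) alpha = take (t - k) (rev alpha) by rewrite Hrev.
by rewrite -rev_drop sumn_rev -sumn_cat cat_take_drop.
Qed.

Lemma psum_t : psum alpha t = sumn alpha.
Proof. by rewrite /psum take_size. Qed.

Definition cnt i := count (fun k => psum alpha k <= i) (iota 1 t).

Lemma cnt_sum i : i <= n -> 1 <= t -> cnt i + cnt (n - i) = t - 1.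
Proof.
move=> Hi Ht; rewrite /cnt.
have Hn : n.+1 = sumn alpha by rewrite /fence_n; lia.
have -> : count (fun k => psum alpha k <= n - i) (iota 1 t)
        = count (fun k => ~~ (psum alpha (t - k) <= i)) (iota 1 t).
  apply: eq_in_count => k; rewrite mem_iota => Hk.
  have E := @psum_pal k ltac:(lia).
  apply/idP/idP; lia.
rewrite (count_rev_iota (predC (fun k => psum alpha k <= i))).
have E := count_predC (fun k => psum alpha k <= i) (iota 0 t).
rewrite size_iota in E.
have Hp0 : psum alpha 0 = 0 by rewrite /psum take0.
have Hpt := psum_t.
have H0 : count (fun k => psum alpha k <= i) (iota 0 t)
   = 1 + count (fun k => psum alpha k <= i) (iota 1 (t - 1)).
  have -> : iota 0 t = 0 :: iota 1 (t - 1).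
    by case: (size alpha) Ht => [|t'] //= _; rewrite subn1.
  by rewrite /= Hp0.
have H1 : count (fun k => psum alpha k <= i) (iota 1 t)
   = count (fun k => psum alpha k <= i) (iota 1 (t - 1)).
  have Et : t = (t - 1) + 1 by lia.
  rewrite {1}Et iotaD count_cat /=.
  have -> : 1 + (t - 1) = t by lia.
  rewrite Hpt.
  have -> : (sumn alpha <= i) = false by apply/negbTE; lia.
  by rewrite /= !addn0.
lia.
Qed.

Lemma up_sym j : odd (size alpha) -> 1 <= size alpha -> j.+1 < n ->
  up alpha j = up alpha (n - 2 - j).
Proof.
move=> Ho Ht Hj; rewrite /up /seg -/(cnt _) -/(cnt _) /=.
have -> : (n - 2 - j).+1 = n - j.+1 by lia.
have E := @cnt_sum j.+1 ltac:(lia) Ht.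
have Ho' : ~~ odd (size alpha - 1).
  by move: Ho; case: (size alpha) => //= t'; rewrite subn1 /= => ->.
move: Ho'; rewrite -E oddD.
by case: (odd (cnt j.+1)); case: (odd (cnt (n - j.+1))).
Qed.

Lemma fle_rev : odd (size alpha) -> 1 <= size alpha ->
  forall u v : 'I_n, fle alpha u v -> fle alpha (rev_ord v) (rev_ord u).
Proof.
move=> Ho Ht u v /fleP H; apply/fleP; rewrite /FF /=.
have Hu := ltn_ord u; have Hv := ltn_ord v.
case: H => [[H1 H2]|[H1 H2]].
- left; split; first lia.
  move=> j Hj; rewrite up_sym //; last lia.
  apply: H2; lia.
- right; split; first lia.
  move=> j Hj; rewrite up_sym //; last lia.
  apply: H2; lia.
Qed.
End Pal.

Local Open Scope ring_scope.

Theorem corollary5p11 (alpha : seq nat)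
  (ht : (2 <= size alpha)%N)
  (hpos : all (fun a => 0 < a)%N alpha)
  (hfirst : (2 <= head 0 alpha)%N)
  (hlast : (2 <= last 0 alpha)%N)
  (hpal : forall i : nat, (i < size alpha)%N ->
            nth 0%N alpha i = nth 0%N alpha (size alpha - 1 - i))
  (hodd : odd (size alpha)) :
  (forall k : 'I_(fence_n alpha),
      mesic alpha (fun I => chi alpha k I - chi alpha (rev_ord k) I) 0)
  <->
  (forall k : 'I_(fence_n alpha),
      mesic alpha (fun I => chihat alpha k I + chihat alpha (rev_ord k) I) 1).
Proof.
have Hra : rev alpha = alpha.
  apply: (@eq_from_nth _ 0%N); first by rewrite size_rev.
  move=> i; rewrite size_rev => Hi; rewrite nth_rev // hpal; [congr nth; lia | lia].
have Hs : (1 <= sumn alpha)%N.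
  have Hh : (head 0%N alpha <= sumn alpha)%N by case: (alpha) => //= a s; lia.
  lia.
have Ht : (1 <= size alpha)%N by lia.
have Hanti := @fle_rev alpha Hra Hs hodd Ht.
have HN : forall I, (size (orbit (rowmotion alpha) I))%:R != 0 :> rat.
  by move=> I; rewrite pnatr_eq0 size_orbit -lt0n order_gt0.
have EA : forall k I,
  (\sum_(J <- orbit (rowmotion alpha) I) (chi alpha k J - chi alpha (rev_ord k) J))
    / (size (orbit (rowmotion alpha) I))%:R = 0 <-> aa alpha I k = 0.
  move=> k I; rewrite /aa -S_sub /Sorb; split.
    by move/eqP; rewrite mulf_eq0 invr_eq0 (negbTE (HN I)) orbF => /eqP.
  by move=> ->; rewrite mul0r.
have EB : forall k I,
  (\sum_(J <- orbit (rowmotion alpha) I) (chihat alpha k J + chihat alpha (rev_ord k) J))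
    / (size (orbit (rowmotion alpha) I))%:R = 1 <-> bb alpha I k = 0.
  move=> k I; rewrite /bb /chs -S_add /Sorb; split.
    move=> H; apply/eqP; rewrite subr_eq0; apply/eqP.
    by rewrite -(divfK (HN I) (\sum_(J <- _) _)) H mul1r.
  by move/eqP; rewrite subr_eq0 => /eqP ->; rewrite divff.
split => H k I HI.
- apply/EB; apply: (@b_of_a alpha Hanti I HI) => p; apply/EA; exact: H.
- apply/EA; apply: (@a_of_b alpha Hanti I HI) => p; apply/EB; exact: H.
Qed.
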